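(* The three-dimensional closed convex cone $\mathcal{P}^{s+}_{4,3}$ is a polyhedral cone with exactly four extremal rays, generated respectively by $g_1=T^4_{2,1}-3S^4_{1,1,1}$, $g_2=3S^4_3+3S^4_{1,1,1}-2T^4_{2,1}$, $g_3=S^4_{1,1,1}$, $g_4=S^4_3+3S^4_{1,1,1}-T^4_{2,1}$. Moreover each $g_i$ is characterized in $\mathcal{P}^{s+}_{4,3}$ by equality conditions: if $f\in\mathcal{P}^{s+}_{4,3}$ satisfies $f(1,0,0,0)=f(1,1,1,1)=0$ then $f\in\mathbb{R}_{\ge0}g_1$; $f(1,1,1,0)=f(1,1,1,1)=0$ then $f\in\mathbb{R}_{\ge0}g_2$; $f(1,0,0,0)=f(1,1,0,0)=0$ then $f\in\mathbb{R}_{\ge0}g_3$; $f(1,1,0,0)=f(1,1,1,0)=0$ then $f\in\mathbb{R}_{\ge0}g_4$.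
   Context: Variables $x_1,x_2,x_3,x_4$ (also written $a,b,c,d$). $S^4_3=\sum_{i=1}^4x_i^3$, $T^4_{2,1}=\sum_{i=1}^4x_i^2\sum_{j\ne i}x_j$, $S^4_{1,1,1}=bcd+acd+abd+abc$. $\mathcal{H}^s_{4,3}$ is the real vector space of symmetric homogeneous cubic forms in $\mathbb{R}[a,b,c,d]$ and $\mathcal{P}^{s+}_{4,3}=\{f\in\mathcal{H}^s_{4,3}: f(x)\ge0 \text{ for all } x\in\mathbb{R}_{\ge0}^4\}$. For a closed convex cone $\mathcal{P}$, $f\in\mathcal{P}\setminus\{0\}$ is extremal (generates an extremal ray) if $f=g+h$ with $g,h\in\mathcal{P}$ forces $g,h\in\mathbb{R}_{\ge0}f$. *)

(* Defs.v *)
From HB Require Import structures.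
From mathcomp Require Import all_boot all_order all_algebra.
From mathcomp Require Import mpoly.
Set Implicit Arguments.
Unset Strict Implicit.
Unset Printing Implicit Defensive.
Import Order.TTheory GRing.Theory Num.Theory.
Local Open Scope ring_scope.

Section Cubics.
Variable R : realFieldType.

(* variables x_1..x_4 = a,b,c,d are 'X_0 .. 'X_3 *)
Definition S3 : {mpoly R[4]} := \sum_(i < 4) 'X_i ^+ 3.
Definition T21 : {mpoly R[4]} :=
  \sum_(i < 4) ('X_i ^+ 2 * \sum_(j < 4 | j != i) 'X_j).
Definition S111 : {mpoly R[4]} :=
  \sum_(i < 4) \prod_(j < 4 | j != i) 'X_j.

Definition g1 : {mpoly R[4]} := T21 - 3%:R *: S111.
Definition g2 : {mpoly R[4]} := 3%:R *: S3 + 3%:R *: S111 - 2%:R *: T21.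
Definition g3 : {mpoly R[4]} := S111.
Definition g4 : {mpoly R[4]} := S3 + 3%:R *: S111 - T21.

(* g i = g_(i+1) *)
Definition g (i : 'I_4) : {mpoly R[4]} := nth 0 [:: g1; g2; g3; g4] i.

Definition Hs43 (f : {mpoly R[4]}) : Prop :=
  f \is 3.-homog /\ f \is symmetric.

Definition Ps43 (f : {mpoly R[4]}) : Prop :=
  Hs43 f /\ forall x : 'I_4 -> R, (forall i, 0 <= x i) -> 0 <= f.@[x].

Definition in_ray (f h : {mpoly R[4]}) : Prop :=
  exists l : R, 0 <= l /\ h = l *: f.

Definition extremal (P : {mpoly R[4]} -> Prop) (f : {mpoly R[4]}) : Prop :=
  [/\ P f, f != 0 &
      forall u v, P u -> P v -> f = u + v -> in_ray f u /\ in_ray f v].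

Definition pt (a b c d : R) : 'I_4 -> R := fun i => nth 0 [:: a; b; c; d] i.

End Cubics.

(* Main.v *)
Require Import Defs.
From HB Require Import structures.
From mathcomp Require Import all_boot all_order all_algebra.
From mathcomp Require Import mpoly.
From mathcomp Require Import perm fingroup.
From mathcomp Require Import ring lra.
Import Order.TTheory GRing.Theory Num.Theory.
Local Open Scope ring_scope.

Section Ineq.
Variable R : realFieldType.
Implicit Types a b c d p q r : R.

Lemma add4_ge0 (x y z w : R) : 0<=x -> 0<=y -> 0<=z -> 0<=w -> 0<=x+y+z+w.
Proof. lra. Qed.

Definition schur p q r := p*(p-q)*(p-r)+q*(q-p)*(q-r)+r*(r-p)*(r-q).

Lemma schur_ord p q r : 0 <= r -> r <= q -> q <= p -> 0 <= schur p q r.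
Proof.
move=> h0 h1 h2; rewrite /schur.
have -> : p*(p-q)*(p-r)+q*(q-p)*(q-r)+r*(r-p)*(r-q)
   = (p-q)^+2*(p+q-r) + r*((p-r)*(q-r)) by ring.
apply: addr_ge0; apply: mulr_ge0 => //.
- by rewrite sqr_ge0.
- lra.
- apply: mulr_ge0; lra.
Qed.

Lemma schur_ge0 p q r : 0 <= p -> 0 <= q -> 0 <= r -> 0 <= schur p q r.
Proof.
move=> hp hq hr.
have E1 : schur p q r = schur q p r by rewrite /schur; ring.
have E2 : schur p q r = schur p r q by rewrite /schur; ring.
have E3 : schur p q r = schur r q p by rewrite /schur; ring.
have E4 : schur p q r = schur q r p by rewrite /schur; ring.
have E5 : schur p q r = schur r p q by rewrite /schur; ring.
case: (lerP q p) => h1; case: (lerP r q) => h2; case: (lerP r p) => h3.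
all: first [ by apply: schur_ord; lra
           | rewrite E1; apply: schur_ord; lra
           | rewrite E2; apply: schur_ord; lra
           | rewrite E3; apply: schur_ord; lra
           | rewrite E4; apply: schur_ord; lra
           | rewrite E5; apply: schur_ord; lra ].
Qed.

Definition E3 a b c d := a^+3+b^+3+c^+3+d^+3.
Definition ET a b c d := a^+2*(b+c+d)+b^+2*(a+c+d)+c^+2*(a+b+d)+d^+2*(a+b+c).
Definition E111 a b c d := a*b*c+a*b*d+a*c*d+b*c*d.

Lemma ev1_ge0 a b c d : 0 <= a -> 0 <= b -> 0 <= c -> 0 <= d ->
  0 <= ET a b c d - 3 * E111 a b c d.
Proof.
move=> ha hb hc hd.
pose t (x y z : R) := x*(y-z)^+2 + y*(x-z)^+2 + z*(x-y)^+2.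
have ht : forall x y z, 0 <= x -> 0 <= y -> 0 <= z -> 0 <= t x y z.
  move=> x y z hx hy hz; rewrite /t.
  repeat apply: addr_ge0; apply: mulr_ge0 => //; by rewrite sqr_ge0.
have E : 2 * (ET a b c d - 3 * E111 a b c d) =
  t a b c + t a b d + t a c d + t b c d.
  rewrite /t /ET /E111; ring.
have : 0 <= t a b c + t a b d + t a c d + t b c d.
  by apply: add4_ge0; apply: ht.
rewrite -E; lra.
Qed.

Lemma ev2_ge0 a b c d : 0 <= a -> 0 <= b -> 0 <= c -> 0 <= d ->
  0 <= 3 * E3 a b c d + 3 * E111 a b c d - 2 * ET a b c d.
Proof.
move=> ha hb hc hd.
have -> : 3 * E3 a b c d + 3 * E111 a b c d - 2 * ET a b c d =
  schur a b c + schur a b d + schur a c d + schur b c d.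
  rewrite /schur /E3 /ET /E111; ring.
by apply: add4_ge0; apply: schur_ge0.
Qed.

Definition e4 a b c d := E3 a b c d + 3 * E111 a b c d - ET a b c d.

Lemma ev4_min a b c d : 0 <= d -> d <= a -> d <= b -> d <= c ->
  0 <= e4 a b c d.
Proof.
move=> hd ha hb hc.
have -> : e4 a b c d = schur (a-d) (b-d) (c-d) + 4*d^+3
   + 3*d^+2*((a-d)+(b-d)+(c-d))
   + 2*d*((a-d)*(b-d)+(b-d)*(c-d)+(a-d)*(c-d)).
  rewrite /e4 /schur /E3 /ET /E111; ring.
have h1 : 0 <= schur (a-d) (b-d) (c-d) by apply: schur_ge0; lra.
have h2 : 0 <= d^+3 by apply: exprn_ge0.
have h3 : 0 <= d^+2*((a-d)+(b-d)+(c-d)) by apply: mulr_ge0; [apply: exprn_ge0|lra].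
have h4 : 0 <= d*((a-d)*(b-d)+(b-d)*(c-d)+(a-d)*(c-d)).
  apply: mulr_ge0 => //.
  repeat apply: addr_ge0; apply: mulr_ge0; lra.
lra.
Qed.

Lemma ev4_ge0 a b c d : 0 <= a -> 0 <= b -> 0 <= c -> 0 <= d ->
  0 <= e4 a b c d.
Proof.
move=> ha hb hc hd.
have S1 : e4 a b c d = e4 b c d a by rewrite /e4 /E3 /ET /E111; ring.
have S2 : e4 a b c d = e4 a c d b by rewrite /e4 /E3 /ET /E111; ring.
have S3 : e4 a b c d = e4 a b d c by rewrite /e4 /E3 /ET /E111; ring.
have S4 : e4 a b c d = e4 b c a d by rewrite /e4 /E3 /ET /E111; ring.
case: (lerP a b) => h1; case: (lerP c d) => h2.
- case: (lerP a c) => h3.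
  + rewrite S1; apply: ev4_min; lra.
  + rewrite S3; apply: ev4_min; lra.
- case: (lerP a d) => h3.
  + rewrite S1; apply: ev4_min; lra.
  + apply: ev4_min; lra.
- case: (lerP b c) => h3.
  + rewrite S2; apply: ev4_min; lra.
  + rewrite S3; apply: ev4_min; lra.
- case: (lerP b d) => h3.
  + rewrite S2; apply: ev4_min; lra.
  + apply: ev4_min; lra.
Qed.
End Ineq.
Arguments E3 {R}.
Arguments ET {R}.
Arguments E111 {R}.
Arguments e4 {R}.


Notation o0 := (@Ordinal 4 0 isT).
Notation o1 := (@Ordinal 4 1 isT).
Notation o2 := (@Ordinal 4 2 isT).
Notation o3 := (@Ordinal 4 3 isT).

Lemma sum4 (V : nmodType) (F : 'I_4 -> V) : \sum_(i < 4) F i = F o0 + F o1 + F o2 + F o3.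
Proof.
rewrite !big_ord_recl big_ord0 addr0 !addrA.
by congr (F _ + F _ + F _ + F _); apply: val_inj.
Qed.

Lemma prod4 (V : comPzSemiRingType) (F : 'I_4 -> V) : \prod_(i < 4) F i = F o0 * F o1 * F o2 * F o3.
Proof.
rewrite !big_ord_recl big_ord0 mulr1 !mulrA.
by congr (F _ * F _ * F _ * F _); apply: val_inj.
Qed.

Section Main.
Variable R : realFieldType.
Local Notation P := {mpoly R[4]}.
Local Notation X0 := ('X_o0 : P).
Local Notation X1 := ('X_o1 : P).
Local Notation X2 := ('X_o2 : P).
Local Notation X3 := ('X_o3 : P).

Lemma S3E : S3 R = X0^+3 + X1^+3 + X2^+3 + X3^+3.
Proof. by rewrite /S3 sum4. Qed.

Lemma T21E : T21 R = X0^+2*(X1+X2+X3) + X1^+2*(X0+X2+X3) + X2^+2*(X0+X1+X3) + X3^+2*(X0+X1+X2).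
Proof.
rewrite /T21 sum4 !(big_mkcond (fun j => j != _)) !sum4 /=.
by rewrite !add0r !addr0.
Qed.

Lemma S111E : S111 R = X1*X2*X3 + X0*X2*X3 + X0*X1*X3 + X0*X1*X2.
Proof.
rewrite /S111 sum4 !(big_mkcond (fun j => j != _)) !prod4 /=.
by rewrite !mul1r !mulr1.
Qed.

Lemma msymXU (s : 'S_4) i : msym s ('X_i : P) = 'X_(s i).
Proof.
rewrite msymX; congr 'X_[_]; apply/mnmP => j; rewrite mnmE !mnm1E.
by congr (nat_of_bool _); apply/eqP/eqP => [->|<-]; rewrite ?permKV ?permK.
Qed.

Lemma psum_sym k : \sum_(i < 4) ('X_i : P)^+k \is symmetric.
Proof.
apply/issymP => s; rewrite rmorph_sum /=.
rewrite [RHS](reindex_inj (@perm_inj _ s)) /=; apply: eq_bigr => i _.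
by rewrite rmorphXn /= msymXU.
Qed.

Lemma T21E2 : T21 R = (\sum_(i < 4) ('X_i : P)^+2) * (\sum_(i < 4) ('X_i : P)^+1) - S3 R.
Proof.
rewrite /T21 /S3 mulr_suml -sumrB; apply: eq_bigr => i _.
rewrite [in RHS](bigD1 i) //= mulrDr ?expr1 -exprSr.
by rewrite addrAC subrr add0r.
Qed.

Lemma S3_sym : S3 R \is symmetric. Proof. exact: psum_sym. Qed.
Lemma T21_sym : T21 R \is symmetric.
Proof. by rewrite T21E2 rpredB ?rpredM ?psum_sym ?S3_sym. Qed.
Lemma S111_sym : S111 R \is symmetric.
Proof.
apply/issymP => s; rewrite /S111 rmorph_sum /=.
rewrite [RHS](reindex_inj (@perm_inj _ s)) /=; apply: eq_bigr => i _.
rewrite rmorph_prod /= [RHS](reindex_inj (@perm_inj _ s)) /=.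
apply: eq_big => [j|j _]; first by rewrite (inj_eq (@perm_inj _ s)).
by rewrite msymXU.
Qed.

Lemma X_homog i : ('X_i : P) \is 1.-homog.
Proof. by rewrite dhomogX; apply/eqP; apply: mdeg1. Qed.

Lemma S3_homog : S3 R \is 3.-homog.
Proof. by rewrite S3E !rpredD // (dhomogMn 3 (X_homog _)). Qed.
Lemma T21_homog : T21 R \is 3.-homog.
Proof.
by rewrite T21E !rpredD // (dhomogM (dhomogMn 2 (X_homog _))) // !rpredD // X_homog.
Qed.
Lemma S111_homog : S111 R \is 3.-homog.
Proof.
by rewrite S111E !rpredD // !(dhomogM (dhomogM (X_homog _) (X_homog _)) (X_homog _)).
Qed.

Definition Cf (a b c : R) : P := a *: S3 R + b *: T21 R + c *: S111 R.

Lemma Cf_Hs a b c : Hs43 (Cf a b c).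
Proof.
split.
- by rewrite /Cf !rpredD // dhomogZ // (S3_homog, T21_homog, S111_homog).
- by rewrite /Cf !rpredD // rpredZ // (S3_sym, T21_sym, S111_sym).
Qed.

Lemma Cf_eval a b c (x : 'I_4 -> R) : (Cf a b c).@[x] =
  a * E3 (x o0) (x o1) (x o2) (x o3) + b * ET (x o0) (x o1) (x o2) (x o3)
  + c * E111 (x o0) (x o1) (x o2) (x o3).
Proof.
rewrite /Cf S3E T21E S111E.
rewrite !(mevalD, mevalZ, mevalM, rmorphXn, mevalXU).
rewrite /E3 /ET /E111; ring.
Qed.

Lemma ord4P (Q : 'I_4 -> Prop) : Q o0 -> Q o1 -> Q o2 -> Q o3 -> forall i, Q i.
Proof.
move=> h0 h1 h2 h3 [[|[|[|[|k]]]] hk] //.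
- by have -> : Ordinal hk = o0 by apply: val_inj.
- by have -> : Ordinal hk = o1 by apply: val_inj.
- by have -> : Ordinal hk = o2 by apply: val_inj.
- by have -> : Ordinal hk = o3 by apply: val_inj.
Qed.

Lemma eqmnm4 (m m' : 'X_{1..4}) :
  (m == m') = [&& m o0 == m' o0, m o1 == m' o1, m o2 == m' o2 & m o3 == m' o3].
Proof.
apply/eqP/and4P => [->|[/eqP h0 /eqP h1 /eqP h2 /eqP h3]]; first by rewrite !eqxx.
by apply/mnmP; apply: ord4P.
Qed.

Definition m30 : 'X_{1..4} := (U_(o0) *+ 3)%MM.
Definition m21 : 'X_{1..4} := (U_(o0) *+ 2 + U_(o1))%MM.
Definition m111 : 'X_{1..4} := (U_(o0) + U_(o1) + U_(o2))%MM.

Lemma Cf_coef a b c :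
  [/\ (Cf a b c)@_m30 = a, (Cf a b c)@_m21 = b & (Cf a b c)@_m111 = c].
Proof.
rewrite /Cf S3E T21E S111E !mulrDr !mpolyXn -!mpolyXD.
rewrite /m30 /m21 /m111.
split; rewrite !(mcoeffD, mcoeffZ, mcoeffX) !eqmnm4 !mnmDE ?mulmnE !mnm1E /=; ring.
Qed.

End Main.

Arguments Cf_coef {R}.
Arguments Cf_Hs {R}.
Arguments Cf_eval {R}.
Arguments ev1_ge0 {R a b c d}.
Arguments ev2_ge0 {R a b c d}.
Arguments ev4_ge0 {R a b c d}.

Section Main.
Variable R : realFieldType.
Local Notation P := {mpoly R[4]}.
Local Notation X0 := ('X_o0 : P).
Local Notation X1 := ('X_o1 : P).
Local Notation X2 := ('X_o2 : P).
Local Notation X3 := ('X_o3 : P).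
Local Notation Cf := (@Cf R).
Lemma sum4n (F : 'I_4 -> nat) : (\sum_(i < 4) F i)%N = (F o0 + F o1 + F o2 + F o3)%N.
Proof.
rewrite !big_ord_recl big_ord0 addn0 !addnA.
by congr (F _ + F _ + F _ + F _)%N; apply: val_inj.
Qed.

Lemma enum3 (x0 x1 x2 x3 : nat) : (x0 + x1 + x2 + x3 == 3)%N ->
  [|| perm_eq [:: x0; x1; x2; x3] [:: 3; 0; 0; 0]%N,
      perm_eq [:: x0; x1; x2; x3] [:: 2; 1; 0; 0]%N |
      perm_eq [:: x0; x1; x2; x3] [:: 1; 1; 1; 0]%N].
Proof.
by move: x0 x1 x2 x3 => [|[|[|[|x0]]]] [|[|[|[|x1]]]] [|[|[|[|x2]]]] [|[|[|[|x3]]]].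
Qed.

Lemma coef_perm (p : P) (m m' : 'X_{1..4}) : p \is symmetric ->
  perm_eq (tval (multinom_val m)) (tval (multinom_val m')) -> p@_m = p@_m'.
Proof.
move=> hs /tuple_permP [q hq].
rewrite -[RHS](msym_coeff m' q hs); congr (_@__).
apply/mnmP => i; rewrite mnmE !mnm_tnth.
by rewrite (tnth_nth 0%N) hq -tnth_nth tnth_mktuple.
Qed.

Lemma m30_seq : tval (multinom_val m30) = [:: 3; 0; 0; 0]%N.
Proof.
have -> : m30 = [multinom [tuple 3%N; 0%N; 0%N; 0%N]].
  by apply/mnmP; apply: ord4P; rewrite /m30 ?mulmnE mnm1E.
by [].
Qed.
Lemma m21_seq : tval (multinom_val m21) = [:: 2; 1; 0; 0]%N.
Proof.
have -> : m21 = [multinom [tuple 2%N; 1%N; 0%N; 0%N]].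
  by apply/mnmP; apply: ord4P; rewrite /m21 !mnmDE ?mulmnE !mnm1E.
by [].
Qed.
Lemma m111_seq : tval (multinom_val m111) = [:: 1; 1; 1; 0]%N.
Proof.
have -> : m111 = [multinom [tuple 1%N; 1%N; 1%N; 0%N]].
  by apply/mnmP; apply: ord4P; rewrite /m111 !mnmDE !mnm1E.
by [].
Qed.

Lemma Hs_Cf f : Hs43 f -> f = Cf (f@_m30) (f@_m21) (f@_m111).
Proof.
case=> hh hs.
set a := f@_m30; set b := f@_m21; set c := f@_m111.
have [c1 c2 c3] := Cf_coef a b c.
have [ch cs] := Cf_Hs a b c.
apply/mpolyP => m.
have [d3|d3] := eqVneq (mdeg m) 3%N; last first.
  by rewrite (dhomog_nemf_coeff hh d3) (dhomog_nemf_coeff ch d3).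
have : [|| perm_eq (tval (multinom_val m)) [:: 3; 0; 0; 0]%N,
      perm_eq (tval (multinom_val m)) [:: 2; 1; 0; 0]%N |
      perm_eq (tval (multinom_val m)) [:: 1; 1; 1; 0]%N].
  move: d3; rewrite mdegE sum4n.
  case: m => [[s hsz]] /=.
  case: s hsz => [|x0 [|x1 [|x2 [|x3 [|]]]]] // hsz.
  move=> /= h; apply: enum3; apply/eqP; exact: h.
case/or3P => hp.
- by rewrite -m30_seq in hp; rewrite (coef_perm _ _ _ hs hp) (coef_perm _ _ _ cs hp) c1.
- by rewrite -m21_seq in hp; rewrite (coef_perm _ _ _ hs hp) (coef_perm _ _ _ cs hp) c2.
- by rewrite -m111_seq in hp; rewrite (coef_perm _ _ _ hs hp) (coef_perm _ _ _ cs hp) c3.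
Qed.

Lemma CfZ k a b c : k *: Cf a b c = Cf (k*a) (k*b) (k*c).
Proof.
rewrite /Cf -!mul_mpolyC !mpolyCM.
move: (S3 R) (T21 R) (S111 R) => x y z; ring.
Qed.

Lemma CfD a b c a' b' c' : Cf a b c + Cf a' b' c' = Cf (a+a') (b+b') (c+c').
Proof.
rewrite /Cf -!mul_mpolyC !mpolyCD.
move: (S3 R) (T21 R) (S111 R) => x y z; ring.
Qed.

Lemma Cf0 : Cf 0 0 0 = 0 :> P.
Proof. by rewrite /Cf !scale0r !addr0. Qed.

Lemma Cf_inj a b c a' b' c' : Cf a b c = Cf a' b' c' -> [/\ a = a', b = b' & c = c'].
Proof.
move=> e; have [h1 h2 h3] := Cf_coef a b c; have [h1' h2' h3'] := Cf_coef a' b' c'.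
split; [by rewrite -h1 -h1' e | by rewrite -h2 -h2' e | by rewrite -h3 -h3' e].
Qed.

Lemma g1C : g1 R = Cf 0 1 (-3).
Proof.
rewrite /g1 /Cf -!mul_mpolyC !(mpolyCN, mpolyC0, mpolyC1).
move: (S3 R) (T21 R) (S111 R) => x y z; ring.
Qed.
Lemma g2C : g2 R = Cf 3 (-2) 3.
Proof.
rewrite /g2 /Cf -!mul_mpolyC !(mpolyCN, mpolyC0, mpolyC1).
move: (S3 R) (T21 R) (S111 R) => x y z; ring.
Qed.
Lemma g3C : g3 R = Cf 0 0 1.
Proof.
rewrite /g3 /Cf -!mul_mpolyC !(mpolyCN, mpolyC0, mpolyC1).
move: (S3 R) (T21 R) (S111 R) => x y z; ring.
Qed.
Lemma g4C : g4 R = Cf 1 (-1) 3.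
Proof.
rewrite /g4 /Cf -!mul_mpolyC !(mpolyCN, mpolyC0, mpolyC1).
move: (S3 R) (T21 R) (S111 R) => x y z; ring.
Qed.

Lemma Cf_eq a b c a' b' c' : a = a' -> b = b' -> c = c' -> Cf a b c = Cf a' b' c'.
Proof. by move=> -> -> ->. Qed.

Lemma Cf_pts a b c :
 [/\ (Cf a b c).@[pt 1 0 0 0] = a, (Cf a b c).@[pt 1 1 0 0] = 2*a+2*b,
     (Cf a b c).@[pt 1 1 1 0] = 3*a+6*b+c & (Cf a b c).@[pt 1 1 1 1] = 4*a+12*b+4*c].
Proof. by split; rewrite Cf_eval /pt /= /E3 /ET /E111; ring. Qed.

Lemma pt_ge0 (a b c d : R) : 0 <= a -> 0 <= b -> 0 <= c -> 0 <= d ->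
  forall i, 0 <= pt a b c d i.
Proof. by move=> ha hb hc hd; apply: ord4P. Qed.

Lemma Ps_Cf f : Ps43 f -> exists a b c, f = Cf a b c /\
  [/\ 0 <= a, 0 <= 2*a+2*b, 0 <= 3*a+6*b+c & 0 <= 4*a+12*b+4*c].
Proof.
case=> hH hn; rewrite (Hs_Cf _ hH).
set a := f@_m30; set b := f@_m21; set c := f@_m111.
exists a, b, c; split => //.
have [p1 p2 p3 p4] := Cf_pts a b c.
have h01 : (0:R) <= 0 by [].
have h11 : (0:R) <= 1 by apply: ler01.
split.
- by rewrite -p1 -(Hs_Cf _ hH); apply: hn; apply: pt_ge0.
- by rewrite -p2 -(Hs_Cf _ hH); apply: hn; apply: pt_ge0.
- by rewrite -p3 -(Hs_Cf _ hH); apply: hn; apply: pt_ge0.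
- by rewrite -p4 -(Hs_Cf _ hH); apply: hn; apply: pt_ge0.
Qed.

Lemma g_nonneg i (x : 'I_4 -> R) : (forall j, 0 <= x j) -> 0 <= (g R i).@[x].
Proof.
move=> hx; have h0 := hx o0; have h1 := hx o1; have h2 := hx o2; have h3 := hx o3.
move: i; apply: ord4P; rewrite /g /=.
- rewrite g1C Cf_eval; have := ev1_ge0 h0 h1 h2 h3; lra.
- rewrite g2C Cf_eval; have := ev2_ge0 h0 h1 h2 h3; lra.
- rewrite g3C Cf_eval /E111.
  have : 0 <= x o0 * x o1 * x o2 + x o0 * x o1 * x o3 + x o0 * x o2 * x o3 + x o1 * x o2 * x o3.
    by apply: add4_ge0; rewrite ?mulr_ge0.
  lra.
- rewrite g4C Cf_eval; have := ev4_ge0 h0 h1 h2 h3; rewrite /e4; lra.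
Qed.

Lemma gC_Hs i : Hs43 (g R i).
Proof. move: i; apply: ord4P; rewrite /g /= ?g1C ?g2C ?g3C ?g4C; apply: Cf_Hs. Qed.

Lemma Ps_g i : Ps43 (g R i).
Proof. split; [exact: gC_Hs | move=> x hx; exact: g_nonneg]. Qed.

Lemma Ps0 : Ps43 (0 : P).
Proof.
split; first by split; rewrite rpred0.
by move=> x _; rewrite meval0.
Qed.

Lemma Ps_add (u v : P) : Ps43 u -> Ps43 v -> Ps43 (u + v).
Proof.
case=> [[hu1 hu2] hu] [[hv1 hv2] hv]; split; first by split; rewrite rpredD.
by move=> x hx; rewrite mevalD addr_ge0 ?hu ?hv.
Qed.

Lemma Ps_scale (k : R) (u : P) : 0 <= k -> Ps43 u -> Ps43 (k *: u).
Proof.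
move=> hk [[hu1 hu2] hu]; split; first by split; rewrite ?rpredZ ?dhomogZ.
by move=> x hx; rewrite mevalZ mulr_ge0 ?hu.
Qed.

Lemma Ps_sum (l : 'I_4 -> R) (Q : pred 'I_4) : (forall i, 0 <= l i) ->
  Ps43 (\sum_(i < 4 | Q i) l i *: g R i).
Proof.
move=> hl; apply: (big_ind (@Ps43 R)); [exact: Ps0 | exact: Ps_add |].
by move=> i _; apply: Ps_scale; [apply: hl | apply: Ps_g].
Qed.

Lemma sumgC (l : 'I_4 -> R) : \sum_(i < 4) l i *: g R i =
  Cf (3 * l o1 + l o3) (l o0 - 2 * l o1 - l o3) (-3 * l o0 + 3 * l o1 + l o2 + 3 * l o3).
Proof.
rewrite sum4 /g /= g1C g2C g3C g4C !CfZ !CfD; apply: Cf_eq; ring.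
Qed.

Lemma ray1 a b c : 0 <= 2*a+2*b -> a = 0 -> 4*a+12*b+4*c = 0 -> in_ray (g1 R) (Cf a b c).
Proof. move=> h1 h2 h3; exists b; split; first lra. rewrite g1C CfZ; apply: Cf_eq; lra. Qed.
Lemma ray2 a b c : 0 <= a -> 3*a+6*b+c = 0 -> 4*a+12*b+4*c = 0 -> in_ray (g2 R) (Cf a b c).
Proof. move=> h1 h2 h3; exists (a/3); split; first lra. rewrite g2C CfZ; apply: Cf_eq; lra. Qed.
Lemma ray3 a b c : 0 <= 3*a+6*b+c -> a = 0 -> 2*a+2*b = 0 -> in_ray (g3 R) (Cf a b c).
Proof. move=> h1 h2 h3; exists c; split; first lra. rewrite g3C CfZ; apply: Cf_eq; lra. Qed.
Lemma ray4 a b c : 0 <= a -> 2*a+2*b = 0 -> 3*a+6*b+c = 0 -> in_ray (g4 R) (Cf a b c).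
Proof. move=> h1 h2 h3; exists a; split; first lra. rewrite g4C CfZ; apply: Cf_eq; lra. Qed.

Lemma gCnz i : g R i != 0.
Proof.
move: i; apply: ord4P; rewrite /g /= ?g1C ?g2C ?g3C ?g4C -Cf0;
  apply/eqP => /Cf_inj [h1 h2 h3]; lra.
Qed.

Lemma ext_g i : extremal (@Ps43 R) (g R i).
Proof.
split; [exact: Ps_g | exact: gCnz |].
move=> u v hu hv.
have [au [bu [cu [eu [u1 u2 u3 u4]]]]] := Ps_Cf _ hu.
have [av [bv [cv [ev [v1 v2 v3 v4]]]]] := Ps_Cf _ hv.
rewrite eu ev CfD.
move: i; apply: ord4P; rewrite /g /=.
- rewrite {1}g1C => /Cf_inj [e1 e2 e3]; split; apply: ray1; lra.
- rewrite {1}g2C => /Cf_inj [e1 e2 e3]; split; apply: ray2; lra.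
- rewrite {1}g3C => /Cf_inj [e1 e2 e3]; split; apply: ray3; lra.
- rewrite {1}g4C => /Cf_inj [e1 e2 e3]; split; apply: ray4; lra.
Qed.

Lemma Ps_iff f : Ps43 f <->
  exists l : 'I_4 -> R, (forall i, 0 <= l i) /\ f = \sum_(i < 4) l i *: g R i.
Proof.
split; last first.
  by case=> l [hl ->]; apply: Ps_sum.
move=> hP; have [a [b [c [-> [h1 h2 h3 h4]]]]] := Ps_Cf _ hP.
case: (lerP a (3*(a+b))) => hc.
- exists (fun i : 'I_4 => nth 0 [:: a+b - a/3; a/3; a+3*b+c; 0] i); split.
    by apply: ord4P => /=; lra.
  rewrite sumgC /=; apply: Cf_eq; lra.
- exists (fun i : 'I_4 => nth 0 [:: 0; a+b; 3*a+6*b+c; a - 3*(a+b)] i); split.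
    by apply: ord4P => /=; lra.
  rewrite sumgC /=; apply: Cf_eq; lra.
Qed.

Lemma ext_ray f : extremal (@Ps43 R) f -> exists i, in_ray (g R i) f.
Proof.
case=> hP hnz hext.
have [l [hl ef]] := (Ps_iff f).1 hP.
case: (pickP (fun i => 0 < l i)) => [i hi|hnone]; last first.
  exfalso; move/eqP: hnz; apply; rewrite ef big1 // => i _.
  have : ~~ (0 < l i) by rewrite hnone.
  rewrite -leNgt => hle; have -> : l i = 0 by apply/eqP; rewrite eq_le hle hl.
  by rewrite scale0r.
exists i.
have e2 : f = l i *: g R i + \sum_(j < 4 | j != i) l j *: g R j.
  by rewrite ef (bigD1 i).
have hu : Ps43 (l i *: g R i) by apply: Ps_scale; [apply: hl | apply: Ps_g].
have hv := Ps_sum l (fun j => j != i) hl.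
have [[k [hk eu]] _] := hext _ _ hu hv e2.
have knz : k != 0.
  apply/eqP => k0; move: eu; rewrite k0 scale0r => /eqP.
  rewrite scaler_eq0 (negbTE (gCnz i)) orbF => /eqP li0.
  by move: hi; rewrite li0 ltxx.
exists (k^-1 * l i); split.
  by apply: mulr_ge0; [rewrite invr_ge0 | apply: hl].
by rewrite -scalerA eu scalerA mulVf // scale1r.
Qed.

Lemma ray_distinct i j : i != j -> ~ in_ray (g R j) (g R i).
Proof.
move: i; apply: ord4P; move: j; apply: ord4P => //= _ [l [hl]];
  rewrite /g /= ?g1C ?g2C ?g3C ?g4C CfZ => /Cf_inj [e1 e2 e3]; lra.
Qed.

Lemma charact f : Ps43 f ->
     [/\ f.@[pt 1 0 0 0] = 0 -> f.@[pt 1 1 1 1] = 0 -> in_ray (g1 R) f,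
         f.@[pt 1 1 1 0] = 0 -> f.@[pt 1 1 1 1] = 0 -> in_ray (g2 R) f,
         f.@[pt 1 0 0 0] = 0 -> f.@[pt 1 1 0 0] = 0 -> in_ray (g3 R) f
       & f.@[pt 1 1 0 0] = 0 -> f.@[pt 1 1 1 0] = 0 -> in_ray (g4 R) f].
Proof.
move=> hP; have [a [b [c [-> [h1 h2 h3 h4]]]]] := Ps_Cf _ hP.
have [p1 p2 p3 p4] := Cf_pts a b c; rewrite p1 p2 p3 p4.
split => e1 e2; [apply: ray1 | apply: ray2 | apply: ray3 | apply: ray4]; lra.
Qed.

Lemma basis :
  [/\ forall f : {mpoly R[4]}, Hs43 f ->
        exists c1 c2 c3 : R, f = c1 *: g1 R + c2 *: g2 R + c3 *: g3 R,
      forall c1 c2 c3 : R, c1 *: g1 R + c2 *: g2 R + c3 *: g3 R = 0 ->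
        [/\ c1 = 0, c2 = 0 & c3 = 0]
   &  forall i, Hs43 (g R i)].
Proof.
split.
- move=> f hf; rewrite (Hs_Cf _ hf).
  set a := f@_m30; set b := f@_m21; set c := f@_m111.
  exists (b + 2*a/3), (a/3), (c+3*b+a).
  rewrite g1C g2C g3C !CfZ !CfD; apply: Cf_eq; lra.
- move=> c1 c2 c3; rewrite g1C g2C g3C !CfZ !CfD -Cf0 => /Cf_inj [e1 e2 e3].
  split; lra.
- exact: gC_Hs.
Qed.
End Main.

Theorem proposition1p6 (R : realFieldType) :
  (* the ambient space H^s_{4,3} is three-dimensional, with basis g1, g2, g3 *)
  [/\ forall f : {mpoly R[4]}, Hs43 f ->
        exists c1 c2 c3 : R, f = c1 *: g1 R + c2 *: g2 R + c3 *: g3 R,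
      forall c1 c2 c3 : R, c1 *: g1 R + c2 *: g2 R + c3 *: g3 R = 0 ->
        [/\ c1 = 0, c2 = 0 & c3 = 0]
   &  forall i, Hs43 (g R i)] /\
  (* polyhedral: P^{s+}_{4,3} is the cone generated by g1, ..., g4 *)
  (forall f : {mpoly R[4]}, Ps43 f <->
     exists l : 'I_4 -> R, (forall i, 0 <= l i) /\ f = \sum_(i < 4) l i *: g R i) /\
  (* exactly four extremal rays, generated by g1, ..., g4 *)
  [/\ forall i, extremal (@Ps43 R) (g R i),
      forall f, extremal (@Ps43 R) f -> exists i, in_ray (g R i) f
   &  forall i j, i != j -> ~ in_ray (g R j) (g R i)] /\
  (* characterization by equality conditions *)
  (forall f : {mpoly R[4]}, Ps43 f ->
     [/\ f.@[pt 1 0 0 0] = 0 -> f.@[pt 1 1 1 1] = 0 -> in_ray (g1 R) f,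
         f.@[pt 1 1 1 0] = 0 -> f.@[pt 1 1 1 1] = 0 -> in_ray (g2 R) f,
         f.@[pt 1 0 0 0] = 0 -> f.@[pt 1 1 0 0] = 0 -> in_ray (g3 R) f
       & f.@[pt 1 1 0 0] = 0 -> f.@[pt 1 1 1 0] = 0 -> in_ray (g4 R) f]).
Proof.
split; first exact: basis.
split; first exact: Ps_iff.
split; first by split; [exact: ext_g | exact: ext_ray | exact: ray_distinct].
exact: charact.
Qed.
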